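(* Consider the one-dimensional scalar conservation law $u_t+f(u)_x=0$ on $\Omega=[a,b]$ with periodic (or compactly supported) boundary conditions, and let $u_h(\cdot,t)\in V_h^k$ be the solution of the semi-discrete NOES-DG scheme described in the context. If for every cell $K_i$ the quantities satisfy $$\max\left\{\frac{F_i}{E_i},0\right\}<C\,\sigma_i^{jump},$$ then the scheme is entropy stable in the sense that $$\int_\Omega \partial_t u_h\, v_h\,\mathrm dx\le 0 .$$
   Context: Mesh: $a=x_{1/2}<x_{3/2}<\dots<x_{N+1/2}=b$, uniform, cells $K_i=[x_{i-1/2},x_{i+1/2}]$, $h=x_{i+1/2}-x_{i-1/2}$, midpoint $x_i$. For $k\ge 1$, $V_h^k=\{w: w|_{K_i}\in P^k(K_i)\ \forall i\}$. For $w\in V_h^k$, $w^{-}_{i+1/2}$ and $w^{+}_{i+1/2}$ denote the traces of $w$ at $x_{i+1/2}$ from $K_i$ and $K_{i+1}$, $[\![w]\!]_{i+1/2}=w^+_{i+1/2}-w^-_{i+1/2}$; with periodic boundary conditions cell indices are taken modulo $N$ (with compactly supported data the boundary flux contributions vanish). Entropy pair $(U,F)$: $U$ convex, $F'(u)=U'(u)f'(u)$; entropy variable $v(u)=U'(u)$ and $A(u)=U''(u)^{-1}\ge 0$. Numerical flux: local Lax–Friedrichs $\hat f(u^-,u^+)=\tfrac12[f(u^+)+f(u^-)]-\tfrac12\alpha(u^+-u^-)$, $\alpha=\max_{u \text{ between } u^-,u^+}|f'(u)|$, split as $\hat f=\hat f^C+\hat f^D$ with $\hat f^C=\tfrac12(f(u^+)+f(u^-))$,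 $\hat f^D=-\tfrac12\alpha(u^+-u^-)$; $\hat f_{i+1/2}=\hat f(u_h|^-_{i+1/2},u_h|^+_{i+1/2})$. Numerical entropy flux $\hat F(u^-,u^+)=\tfrac12(F(u^+)+F(u^-))$, $\hat F_{i+1/2}=\hat F(u_h|^-_{i+1/2},u_h|^+_{i+1/2})$. NOES-DG scheme: find $u_h(\cdot,t)\in V_h^k$ such that for all $w\in V_h^k$ and all $i$, $$\int_{K_i}\partial_t u_h\,w\,\mathrm dx=\int_{K_i}f(u_h)\,\partial_x w\,\mathrm dx-\hat f_{i+1/2}w^-_{i+1/2}+\hat f_{i-1/2}w^+_{i-1/2}-\sigma_i\int_{K_i}\nu_i\,\partial_x v_h\,A(u_h)\,\partial_x w\,\mathrm dx,$$ where $\nu_i(x)=1-\big(\tfrac{x-x_i}{h/2}\big)^2$, $v_h\in V_h^k$ is on each cell the degree-$k$ interpolant of $v(u_h)$ at the $k+1$ Gauss–Lobatto points of $K_i$ (so $v_h|^-_{i+1/2}=v(u_h|^-_{i+1/2})$ and $v_h|^+_{i-1/2}=v(u_h|^+_{i-1/2})$), and $\sigma_i=\max\{\sigma_i^{jump},\sigma_i^{entropy}\}$ with $\sigma_i^{jump}=c_f\big(h\|[\![u_h]\!]\|_{\partial K_i}+\sum_{l=1}^k l(l+1)h^{l+1}\|[\![\partial_x^l u_h]\!]\|_{\partial K_i}\big)$, $\|[\![\partial_x^lu_h]\!]\|_{\partial K_i}=|[\![\partial_x^lu_h]\!]_{i-1/2}|+|[\![\partial_x^lu_h]\!]_{i+1/2}|$,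 $c_f=c_0\max_{x\in K_i}|f'(u_h(x))|$ with a constant $c_0>0$; $\sigma_i^{entropy}=\min\{\max\{F_i/E_i,0\},\,C\sigma_i^{jump}\}$ with a constant $C>1$, where $E_i=\int_{K_i}\nu_i\,\partial_xv_h\,A(u_h)\,\partial_xv_h\,\mathrm dx$ and $F_i=\hat F_{i+1/2}-\hat F_{i-1/2}-\hat f^C_{i+1/2}v_h|^-_{i+1/2}+\hat f^C_{i-1/2}v_h|^+_{i-1/2}+\int_{K_i}f(u_h)\partial_xv_h\,\mathrm dx$. The integrals appearing in the scheme and those in $E_i$ and $F_i$ are evaluated in the same way (exactly, or with one and the same quadrature rule). *)

(* Defs.v *)
From Stdlib Require Import Reals Lra.
From Coquelicot Require Import Coquelicot.
Open Scope R_scope.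

Fixpoint sumN (g : nat -> R) (n : nat) : R :=
  match n with O => 0 | S m => sumN g m + g m end.

Definition IsPk (k : nat) (p : R -> R) : Prop :=
  exists c : nat -> R, forall x, p x = sumN (fun j => c j * x ^ j) (S k).

(* w : cell index -> function; w i is the polynomial on cell K_i, i = 0..N-1 *)
Definition InVh (N k : nat) (w : nat -> R -> R) : Prop :=
  forall i, (i < N)%nat -> IsPk k (w i).

(* uniform mesh of [a,b] with N cells; cell i (0-based) is [xL i, xR i] *)
Definition mesh_h (a b : R) (N : nat) : R := (b - a) / INR N.
Definition xL (a b : R) (N i : nat) : R := a + INR i * mesh_h a b N.
Definition xR (a b : R) (N i : nat) : R := a + INR (S i) * mesh_h a b N.
Definition xC (a b : R) (N i : nat) : R := a + (INR i + / 2) * mesh_h a b N.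

Definition nxt (N i : nat) : nat := Nat.modulo (S i) N.
Definition prv (N i : nat) : nat := Nat.modulo (i + N - 1) N.

(* traces at the interface x_{i+1/2} (right end of cell i), periodic *)
Definition trm (a b : R) (N : nat) (w : nat -> R -> R) (i : nat) : R :=
  w i (xR a b N i).
Definition trp (a b : R) (N : nat) (w : nat -> R -> R) (i : nat) : R :=
  w (nxt N i) (xL a b N (nxt N i)).
Definition jmp (a b : R) (N : nat) (w : nat -> R -> R) (l i : nat) : R :=
  Derive_n (w (nxt N i)) l (xL a b N (nxt N i)) - Derive_n (w i) l (xR a b N i).

Definition alphaLF (f : R -> R) (um up : R) : R :=
  real (Lub_Rbar (fun y => exists u, Rmin um up <= u <= Rmax um up /\ y = Rabs (Derive f u))).
Definition fhat (f : R -> R) (um up : R) : R :=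
  (f up + f um) / 2 - / 2 * alphaLF f um up * (up - um).
Definition fhatC (f : R -> R) (um up : R) : R := (f up + f um) / 2.
Definition Fhat (F : R -> R) (um up : R) : R := (F up + F um) / 2.

Definition ventr (U : R -> R) (u : R) : R := Derive U u.
Definition Aentr (U : R -> R) (u : R) : R := / Derive (Derive U) u.

(* Legendre polynomials via the three-term recurrence: leg2 m x = (P_m x, P_{m+1} x) *)
Fixpoint leg2 (n : nat) (x : R) : R * R :=
  match n with
  | O => (1, x)
  | S m => let pq := leg2 m x in
           (snd pq, ((2 * INR m + 3) * x * snd pq - (INR m + 1) * fst pq) / (INR m + 2))
  end.
Definition legendre (n : nat) (x : R) : R := fst (leg2 n x).

Definition GLnode (k : nat) (s : R) : Prop :=
  -1 <= s <= 1 /\ (1 - s ^ 2) * Derive (legendre k) s = 0.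

Definition IsGLInterp (a b : R) (N k : nat) (U : R -> R) (uh vh : nat -> R -> R) : Prop :=
  InVh N k vh /\
  forall i, (i < N)%nat -> forall s, GLnode k s ->
    vh i (xC a b N i + s * (mesh_h a b N / 2)) =
    ventr U (uh i (xC a b N i + s * (mesh_h a b N / 2))).

Definition nu (a b : R) (N i : nat) (x : R) : R :=
  1 - ((x - xC a b N i) / (mesh_h a b N / 2)) ^ 2.

Definition Ecell (a b : R) (N : nat) (U : R -> R) (uh vh : nat -> R -> R) (i : nat) : R :=
  RInt (fun x => nu a b N i x * Derive (vh i) x * Aentr U (uh i x) * Derive (vh i) x)
       (xL a b N i) (xR a b N i).

Definition Fcell (a b : R) (N : nat) (f F : R -> R) (uh vh : nat -> R -> R) (i : nat) : R :=
  Fhat F (trm a b N uh i) (trp a b N uh i)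
  - Fhat F (trm a b N uh (prv N i)) (trp a b N uh (prv N i))
  - fhatC f (trm a b N uh i) (trp a b N uh i) * vh i (xR a b N i)
  + fhatC f (trm a b N uh (prv N i)) (trp a b N uh (prv N i)) * vh i (xL a b N i)
  + RInt (fun x => f (uh i x) * Derive (vh i) x) (xL a b N i) (xR a b N i).

Definition cf (a b : R) (N : nat) (f : R -> R) (c0 : R) (uh : nat -> R -> R) (i : nat) : R :=
  c0 * real (Lub_Rbar (fun y => exists x, xL a b N i <= x <= xR a b N i /\
                                          y = Rabs (Derive f (uh i x)))).
Definition jumpnorm (a b : R) (N : nat) (uh : nat -> R -> R) (l i : nat) : R :=
  Rabs (jmp a b N uh l (prv N i)) + Rabs (jmp a b N uh l i).
Definition sig_jump (a b : R) (N k : nat) (f : R -> R) (c0 : R) (uh : nat -> R -> R) (i : nat) : R :=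
  let h := mesh_h a b N in
  cf a b N f c0 uh i *
  (h * jumpnorm a b N uh 0 i
   + sumN (fun m => INR (S m) * INR (S (S m)) * h ^ (S (S m)) * jumpnorm a b N uh (S m) i) k).

Definition sig_entropy (a b : R) (N k : nat) (f F U : R -> R) (c0 C : R)
  (uh vh : nat -> R -> R) (i : nat) : R :=
  Rmin (Rmax (Fcell a b N f F uh vh i / Ecell a b N U uh vh i) 0)
       (C * sig_jump a b N k f c0 uh i).
Definition sigma (a b : R) (N k : nat) (f F U : R -> R) (c0 C : R)
  (uh vh : nat -> R -> R) (i : nat) : R :=
  Rmax (sig_jump a b N k f c0 uh i) (sig_entropy a b N k f F U c0 C uh vh i).

(* du = d/dt uh is determined by the semi-discrete NOES-DG scheme *)
Definition NOES_DG (a b : R) (N k : nat) (f F U : R -> R) (c0 C : R)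
  (uh vh du : nat -> R -> R) : Prop :=
  forall w, InVh N k w -> forall i, (i < N)%nat ->
    RInt (fun x => du i x * w i x) (xL a b N i) (xR a b N i) =
      RInt (fun x => f (uh i x) * Derive (w i) x) (xL a b N i) (xR a b N i)
      - fhat f (trm a b N uh i) (trp a b N uh i) * w i (xR a b N i)
      + fhat f (trm a b N uh (prv N i)) (trp a b N uh (prv N i)) * w i (xL a b N i)
      - sigma a b N k f F U c0 C uh vh i *
        RInt (fun x => nu a b N i x * Derive (vh i) x * Aentr U (uh i x) * Derive (w i) x)
             (xL a b N i) (xR a b N i).

(* Main.v *)
Require Import Defs.
From Stdlib Require Import Reals Lra Lia.
From Coquelicot Require Import Coquelicot.
Open Scope R_scope.

Lemma sumN_le g h n : (forall i, (i < n)%nat -> g i <= h i) -> sumN g n <= sumN h n.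
Proof. induction n; simpl; intros H. lra. pose proof (H n ltac:(lia)). assert (sumN g n <= sumN h n) by (apply IHn; intros; apply H; lia). lra. Qed.

Lemma sumN_ext g h n : (forall i, (i < n)%nat -> g i = h i) -> sumN g n = sumN h n.
Proof. induction n; simpl; intros H. lra. rewrite (H n ltac:(lia)), IHn; auto. Qed.

Lemma sumN_minus g h n : sumN (fun i => g i - h i) n = sumN g n - sumN h n.
Proof. induction n; simpl. lra. rewrite IHn; lra. Qed.

Lemma sumN_shift h m : sumN h (S m) = h 0%nat + sumN (fun i => h (S i)) m.
Proof. induction m. simpl; lra. change (sumN h (S (S m))) with (sumN h (S m) + h (S m)).
rewrite IHm. simpl. lra. Qed.

Lemma prv_S N i : (S i < N)%nat -> prv N (S i) = i.
Proof. intros H. unfold prv. replace (S i + N - 1)%nat with (i + 1 * N)%nat by lia.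
rewrite Nat.Div0.mod_add. apply Nat.mod_small; lia. Qed.

Lemma prv_0 N : (1 <= N)%nat -> prv N 0 = (N - 1)%nat.
Proof. intros H. unfold prv. replace (0 + N - 1)%nat with (N-1)%nat by lia. apply Nat.mod_small; lia. Qed.

Lemma nxt_prv N i : (i < N)%nat -> nxt N (prv N i) = i.
Proof. intros H. destruct i as [|i]. rewrite prv_0 by lia. unfold nxt.
replace (S (N-1)) with N by lia. apply Nat.Div0.mod_same.
rewrite prv_S by lia. unfold nxt. apply Nat.mod_small; lia. Qed.

Lemma prv_lt N i : (1 <= N)%nat -> (prv N i < N)%nat.
Proof. intros; unfold prv; apply Nat.mod_upper_bound; lia. Qed.

Lemma sumN_prv g N : (1 <= N)%nat -> sumN (fun i => g (prv N i)) N = sumN g N.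
Proof. intros H. destruct N as [|M]. lia.
rewrite sumN_shift. rewrite prv_0 by lia. replace (S M - 1)%nat with M by lia.
rewrite (sumN_ext (fun i => g (prv (S M) (S i))) g) by (intros; rewrite prv_S by lia; auto).
simpl; lra. Qed.

Lemma real_lub_ge0 (E : R -> Prop) y : E y -> 0 <= y -> (forall z, E z -> 0 <= z) -> 0 <= real (Lub_Rbar E).
Proof. intros Ey Hy _. destruct (Lub_Rbar_correct E) as [Hub _].
specialize (Hub y Ey). destruct (Lub_Rbar E); simpl in *; lra. Qed.

Lemma alpha_ge0 f um up : 0 <= alphaLF f um up.
Proof. unfold alphaLF. apply (real_lub_ge0 _ (Rabs (Derive f um))).
exists um; split; auto. split; [apply Rmin_l| apply Rmax_l].
apply Rabs_pos. intros z [u [_ ->]]; apply Rabs_pos. Qed.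

Lemma mono_prod g dg : (forall x, is_derive g x (dg x)) -> (forall x, 0 < dg x) ->
  forall x y, 0 <= (y - x) * (g y - g x).
Proof. intros Hd Hp x y. destruct (Rtotal_order x y) as [H|[H|H]].
- assert (g x < g y) by (apply (incr_function g m_infty p_infty dg); simpl; auto; intros; apply Rlt_gt; auto).
  apply Rmult_le_pos; lra.
- subst; lra.
- assert (g y < g x) by (apply (incr_function g m_infty p_infty dg); simpl; auto; intros; apply Rlt_gt; auto).
  nra.
Qed.

Lemma poly_derive c n x : is_derive (fun x => sumN (fun j => c j * x ^ j) n) x
  (sumN (fun j => c j * (INR j * x ^ pred j)) n).
Proof. induction n; simpl.
- apply (is_derive_const 0).
- apply (is_derive_plus (fun x => sumN (fun j => c j * x ^ j) n) (fun x => c n * x ^ n)); auto.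
  auto_derive; auto. ring.
Qed.

Lemma dpoly_cont c n (x : R) : continuous (fun x => sumN (fun j => c j * (INR j * x ^ pred j)) n) x.
Proof. induction n; simpl.
- apply continuous_const.
- apply (continuous_plus (fun x => sumN (fun j => c j * (INR j * x ^ pred j)) n) (fun x => c n * (INR n * x ^ pred n))); auto.
  apply ex_derive_continuous. auto_derive; auto.
Qed.

Lemma Vh_cont N k w i (x : R) : InVh N k w -> (i < N)%nat -> continuous (w i) x.
Proof. intros H Hi. destruct (H i Hi) as [c Hc].
apply (continuous_ext (fun x => sumN (fun j => c j * x ^ j) (S k))). intros; auto.
apply (ex_derive_continuous (fun x => sumN (fun j => c j * x ^ j) (S k))). eexists; apply poly_derive. Qed.

Lemma Vh_dcont N k w i (x : R) : InVh N k w -> (i < N)%nat -> continuous (Derive (w i)) x.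
Proof. intros H Hi. destruct (H i Hi) as [c Hc].
apply (continuous_ext (fun x => sumN (fun j => c j * (INR j * x ^ pred j)) (S k))).
intros t. symmetry. rewrite (Derive_ext _ (fun x => sumN (fun j => c j * x ^ j) (S k))) by auto.
apply is_derive_unique, poly_derive. apply dpoly_cont. Qed.

Lemma h_pos a b N : a < b -> (1 <= N)%nat -> 0 < mesh_h a b N.
Proof. intros. unfold mesh_h. apply Rdiv_lt_0_compat. lra. apply lt_0_INR; lia. Qed.

Lemma Ecell_ge0 a b N k U uh vh i : a < b -> (1 <= N)%nat -> (i < N)%nat ->
  (forall u, continuous (Derive (Derive U)) u) ->
  (forall u, 0 < Derive (Derive U) u) ->
  InVh N k uh -> InVh N k vh -> 0 <= Ecell a b N U uh vh i.
Proof. intros Hab HN Hi HcU HpU Hu Hv. pose proof (h_pos a b N Hab HN) as Hh.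
assert (HLR : xL a b N i <= xR a b N i). { unfold xL, xR. rewrite S_INR. nra. }
unfold Ecell. apply RInt_ge_0; auto.
- apply (ex_RInt_continuous (V:=R_CompleteNormedModule)). intros z _.
  apply (continuous_mult (fun x => nu a b N i x * Derive (vh i) x * Aentr U (uh i x))).
  apply (continuous_mult (fun x => nu a b N i x * Derive (vh i) x)).
  apply (continuous_mult (fun x => nu a b N i x)).
  apply (ex_derive_continuous (fun x => nu a b N i x)). unfold nu. auto_derive. lra.
  eapply Vh_dcont; eauto.
  unfold Aentr. apply continuous_Rinv_comp.
  apply (continuous_comp (uh i) (Derive (Derive U))). eapply Vh_cont; eauto. apply HcU.
  apply Rgt_not_eq, HpU.
  eapply Vh_dcont; eauto.
- intros x Hx. unfold xL, xR in Hx. rewrite S_INR in Hx.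
  assert (0 <= nu a b N i x).
  { unfold nu, xC. set (t := (x - (a + (INR i + / 2) * mesh_h a b N)) / (mesh_h a b N / 2)).
    assert (-1 <= t <= 1). { unfold t. split.
      apply Rle_div_r. lra. nra. apply Rle_div_l. lra. nra. }
    nra. }
  assert (0 < Aentr U (uh i x)) by (unfold Aentr; apply Rinv_0_lt_compat, HpU).
  set (d := Derive (vh i) x). assert (0 <= d * d) by nra.
  replace (nu a b N i x * d * Aentr U (uh i x) * d) with (nu a b N i x * Aentr U (uh i x) * (d*d)) by ring.
  apply Rmult_le_pos; auto. apply Rmult_le_pos; lra.
Qed.

Theorem theorem2p2 (a b : R) (N k : nat) (f F U : R -> R) (c0 C : R)
  (uh vh du : nat -> R -> R) :
  a < b -> (1 <= N)%nat -> (1 <= k)%nat -> 0 < c0 -> 1 < C ->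
  (forall u, ex_derive f u) -> (forall u, continuous (Derive f) u) ->
  (forall u, ex_derive U u) -> (forall u, ex_derive (Derive U) u) ->
  (forall u, continuous (Derive (Derive U)) u) ->
  (forall u, 0 < Derive (Derive U) u) ->
  (forall u, is_derive F u (Derive U u * Derive f u)) ->
  InVh N k uh ->
  IsGLInterp a b N k U uh vh ->
  InVh N k du ->
  NOES_DG a b N k f F U c0 C uh vh du ->
  (forall i, (i < N)%nat -> Ecell a b N U uh vh i <> 0) ->
  (forall i, (i < N)%nat ->
     Rmax (Fcell a b N f F uh vh i / Ecell a b N U uh vh i) 0
       < C * sig_jump a b N k f c0 uh i) ->
  sumN (fun i => RInt (fun x => du i x * vh i x) (xL a b N i) (xR a b N i)) N <= 0.
Proof.
intros Hab HN Hk Hc0 HC Hf Hcf HU HdU HcU HpU HF Hu [Hv HGL] Hdu Hs HE Hcond.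
set (um := fun j => trm a b N uh j).
set (up := fun j => trp a b N uh j).
set (Fh := fun j => Fhat F (um j) (up j)).
set (D := fun j => / 2 * alphaLF f (um j) (up j) * (up j - um j)).
set (P := fun j => - Fh j + D j * ventr U (um j)).
set (Q := fun j => - Fh j + D j * ventr U (up j)).
assert (Hcell : forall i, (i < N)%nat ->
  RInt (fun x => du i x * vh i x) (xL a b N i) (xR a b N i) <= P i - Q (prv N i)).
{ intros i Hi.
  rewrite (Hs vh Hv i Hi).
  assert (HR : vh i (xR a b N i) = ventr U (um i)).
  { unfold um, trm.
    assert (E1 : xR a b N i = xC a b N i + 1 * (mesh_h a b N / 2)).
    { unfold xR, xC. rewrite S_INR. field. }
    rewrite E1. apply HGL; auto. split. lra. ring. }
  assert (HL : vh i (xL a b N i) = ventr U (up (prv N i))).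
  { unfold up, trp. rewrite nxt_prv by auto.
    assert (E1 : xL a b N i = xC a b N i + (-1) * (mesh_h a b N / 2)).
    { unfold xL, xC. field. }
    rewrite E1. apply HGL; auto. split. lra. ring. }
  assert (HEp : 0 < Ecell a b N U uh vh i).
  { destruct (Ecell_ge0 a b N k U uh vh i Hab HN Hi HcU HpU Hu Hv) as [H|H]; auto.
    exfalso; apply (HE i Hi); auto. }
  assert (Hsig : Fcell a b N f F uh vh i <= Defs.sigma a b N k f F U c0 C uh vh i * Ecell a b N U uh vh i).
  { assert (H1 : Fcell a b N f F uh vh i / Ecell a b N U uh vh i <= Defs.sigma a b N k f F U c0 C uh vh i).
    { unfold Defs.sigma, sig_entropy. rewrite Rmin_left by (apply Rlt_le, Hcond; auto).
      eapply Rle_trans; [|apply Rmax_r]. apply Rmax_l. }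
    apply Rmult_le_compat_r with (r := Ecell a b N U uh vh i) in H1; [|lra].
    unfold Rdiv in H1. rewrite Rmult_assoc, Rinv_l, Rmult_1_r in H1 by lra. exact H1. }
  unfold Fcell in Hsig.
  unfold P, Q, D, Fh.
  rewrite <- HR, <- HL.
  unfold um, up in *.
  unfold fhat, fhatC in *.
  fold (Ecell a b N U uh vh i). lra. }
eapply Rle_trans. apply (sumN_le _ (fun i => P i - Q (prv N i))). exact Hcell.
rewrite sumN_minus, (sumN_prv Q N HN), <- sumN_minus.
apply Rle_trans with (sumN (fun _ => 0) N); [| clear; induction N; simpl; lra].
apply sumN_le. intros j _. unfold P, Q, D.
pose proof (alpha_ge0 f (um j) (up j)).
pose proof (mono_prod (Derive U) (Derive (Derive U)) ltac:(intros; apply Derive_correct; auto) HpU (um j) (up j)).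
unfold ventr. nra.
Qed.
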